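(* Let $h_1,\dots,h_n$ be $n$ distinct tasks and let $h_i^*\in\mathcal{H}_{\min}(h_i)$ for every $i\in[n]$. Let $\Phi:\{-1,1\}^m\to\mathcal{Z}$ and $g_1,\dots,g_n:\mathcal{Z}\to\mathbb{R}$ be such that $g_i\circ\Phi\in\mathcal{H}(h_i)$ for every $i\in[n]$. Let $\Phi^*=(\Phi^*_1,\dots,\Phi^*_d)\in\mathcal{H}_{\min}(\Phi)$. Then, writing $h^*=(h_1^*,\dots,h_n^* )$ and $g=(g_1,\dots,g_n)$, $$\widehat{\deg}(h^* )-\widehat{\deg}(g\circ\Phi^* )\;\ge\;\sum_{i=1}^n\deg(h_i\mid\Phi^* )-d^2,$$ where $\widehat{\deg}(h^* )=\sum_{i}\deg(h_i^* )$ and $\widehat{\deg}(g\circ\Phi^* )=\sum_i\deg(g_i)+\sum_{j=1}^d\deg(\Phi^*_j)$.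
   Context: Standing setup: integers $m\ge d\ge 1$, $\mathcal{Z}=\{-1,1\}^d$, and $\psi:\mathcal{Z}\to\{-1,1\}^m$ is injective; $\mathcal{X}:=\psi(\mathcal{Z})$. The latent distribution $p$ on $\mathcal{Z}$ has $\mathrm{supp}(p)=\mathcal{Z}$. Every $f:\{-1,1\}^n\to\mathbb{R}$ has a unique expansion $f(x)=\sum_{S\subseteq[n]}\hat f(S)\chi_S(x)$ with $\chi_S(x)=\prod_{i\in S}x_i$; $\deg(f)=\max\{|S|:\hat f(S)\ne0\}$ (degree $0$ for constants). For a multi-output map $f=(f_1,\dots,f_q)$, $\deg(f):=\sum_i\deg(f_i)$. A task is $h:\{-1,1\}^m\to\mathbb{R}$ of which only the values on $\mathcal{X}$ matter; $\mathcal{H}(h):=\{f:\{-1,1\}^m\to\mathbb{R}\mid f=h\text{ on }\mathcal{X}\}$; $\mathcal{H}_{\min}(h)$ is the set of minimum-degree elements of $\mathcal{H}(h)$, whose common degree is written $\deg(\mathcal{H}_{\min}(h))$. For the multi-output $\Phi$, $\mathcal{H}(\Phi)$ is the set of maps $\{-1,1\}^m\to\mathbb{R}^d$ agreeing with $\Phi$ on $\mathcal{X}$, and $\mathcal{H}_{\min}(\Phi)$ its elements minimizing $\sum_j\deg(\cdot_j)$. A composition $g\circ\Phi'$ with $g:\mathcal{Z}\to\mathbb{R}$ is evaluated via the multilinear (Fourier–Walsh) polynomial of $g$; its realization degree is $\widehat{\deg}(g\circ\Phi')=\deg(g)+\deg(\Phi')$, and for a tuple of realizations realization degrees add. Conditional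 degree: for a task $h$ and a representation $\Phi'$ for which some $g$ with $g\circ\Phi'\in\mathcal{H}(h)$ exists, $\deg(h\mid\Phi'):=\deg(\mathcal{H}_{\min}(h))-\max\{\deg(g):g:\mathcal{Z}\to\mathbb{R},\ g\circ\Phi'\in\mathcal{H}(h)\}$. *)

(* Defs.v *)
From mathcomp Require Import all_boot all_order all_algebra.
From mathcomp Require Import boolp reals.
Set Implicit Arguments. Unset Strict Implicit. Unset Printing Implicit Defensive.
Import Order.TTheory GRing.Theory Num.Theory.
Local Open Scope ring_scope.

Section Defs.
Variable R : realType.

(* The hypercube {-1,1}^n, a point being encoded by its sign pattern. *)
Definition cube (n : nat) := {ffun 'I_n -> bool}.

Definition spin (b : bool) : R := if b then 1 else -1.

Definition chi n (S : {set 'I_n}) (x : cube n) : R :=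
  \prod_(i in S) spin (x i).

(* Fourier-Walsh coefficient: the unique coefficient of chi_S in the
   expansion of f (computed by orthogonality). *)
Definition fhat n (f : cube n -> R) (S : {set 'I_n}) : R :=
  (2 ^+ n)^-1 * \sum_(x : cube n) f x * chi S x.

Definition deg n (f : cube n -> R) : nat :=
  \max_(S : {set 'I_n} | fhat f S != 0) #|S|.

Definition mlext d (g : cube d -> R) (y : 'I_d -> R) : R :=
  \sum_(S : {set 'I_d}) fhat g S * \prod_(j in S) y j.

(* Composition g o Phi' of g : Z -> R with a real multi-output map,
   evaluated via the multilinear polynomial of g. *)
Definition compml m d (g : cube d -> R) (Phi' : cube m -> 'I_d -> R)
  : cube m -> R := fun x => mlext g (Phi' x).

(* H(h): functions agreeing with h on X = psi(Z). *)
Definition inH m d (psi : cube d -> cube m) (h f : cube m -> R) : Prop :=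
  forall z : cube d, f (psi z) = h (psi z).

Definition inHmin m d (psi : cube d -> cube m) (h f : cube m -> R) : Prop :=
  inH psi h f /\ forall f', inH psi h f' -> (deg f <= deg f')%N.

(* deg(H_min(h)): the least degree of an element of H(h)
   (all degrees on {-1,1}^m are <= m, and H(h) contains h). *)
Definition degHmin m d (psi : cube d -> cube m) (h : cube m -> R) : nat :=
  \big[minn/m]_(k < m.+1 | `[< exists f, inH psi h f /\ deg f = k >]) k.

Definition embed m d (Phi : cube m -> cube d) : cube m -> 'I_d -> R :=
  fun x j => spin (Phi x j).

Definition inHmap m d (psi : cube d -> cube m) (Phi : cube m -> cube d)
  (Phi' : cube m -> 'I_d -> R) : Prop :=
  forall z : cube d, Phi' (psi z) = embed Phi (psi z).

Definition degmap m d (Phi' : cube m -> 'I_d -> R) : nat :=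
  (\sum_(j < d) deg (fun x => Phi' x j))%N.

Definition inHminmap m d (psi : cube d -> cube m) (Phi : cube m -> cube d)
  (Phi' : cube m -> 'I_d -> R) : Prop :=
  inHmap psi Phi Phi' /\
  forall Phi'', inHmap psi Phi Phi'' -> (degmap Phi' <= degmap Phi'')%N.

(* max { deg g : g : Z -> R, g o Phi' in H(h) }  (every such degree is <= d). *)
Definition maxgdeg m d (psi : cube d -> cube m) (h : cube m -> R)
  (Phi' : cube m -> 'I_d -> R) : nat :=
  \max_(k < d.+1 | `[< exists g : cube d -> R,
                         inH psi h (compml g Phi') /\ deg g = k >]) k.

Definition condDeg m d (psi : cube d -> cube m) (h : cube m -> R)
  (Phi' : cube m -> 'I_d -> R) : int :=
  (degHmin psi h)%:Z - (maxgdeg psi h Phi')%:Z.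

End Defs.

(* Main.v *)
Require Import Defs.
From mathcomp Require Import all_boot all_order all_algebra.
From mathcomp Require Import boolp reals.
From mathcomp Require Import zify ring lra.
Import Order.TTheory GRing.Theory Num.Theory.
Set Implicit Arguments. Unset Strict Implicit. Unset Printing Implicit Defensive.
Local Open Scope ring_scope.

Lemma spin2 (R : realType) b : spin R b * spin R b = 1.
Proof. by case: b; rewrite /spin ?mulrNN mulr1. Qed.

Lemma spinN (R : realType) b : spin R (~~ b) = - spin R b.
Proof. by case: b; rewrite /spin ?opprK. Qed.

Definition flip n (i : 'I_n) (x : cube n) : cube n :=
  [ffun j => if j == i then ~~ x j else x j].

Lemma flipK n i : involutive (@flip n i).
Proof.
move=> x; apply/ffunP => j; rewrite !ffunE; case: (j == i) => //=.
by rewrite negbK.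
Qed.

Lemma chi_flip (R : realType) n (S : {set 'I_n}) i x :
  chi R S (flip i x) = (if i \in S then -1 else 1) * chi R S x.
Proof.
rewrite /chi; case: ifP => iS.
  rewrite (bigD1 i) //= (bigD1 i iS) /= ffunE eqxx spinN mulNr mul1r mulNr; congr (- (_ * _)).
  by apply: eq_big => // j /andP [_ ji]; rewrite ffunE (negbTE ji).
rewrite mul1r; apply: eq_bigr => j jS; rewrite ffunE; case: eqP => // ji.
by rewrite ji iS in jS.
Qed.

Lemma card_cube n : #|{: cube n}| = (2 ^ n)%N.
Proof. by rewrite card_ffun card_bool card_ord. Qed.

Lemma chi_orth (R : realType) n (S T : {set 'I_n}) :
  \sum_(x : cube n) chi R S x * chi R T x = if S == T then (2 ^ n)%:R else 0.
Proof.
case: eqP => [<-|/eqP ST].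
  transitivity (\sum_(x : cube n) (1 : R)).
    apply: eq_bigr => x _; rewrite /chi -big_split /=.
    by rewrite big1 // => i _; rewrite spin2.
  by rewrite sumr_const card_cube.
have [i Hi] : exists i, (i \in S) != (i \in T).
  apply/existsP; move: ST; apply: contraR; rewrite negb_exists => /forallP H.
  by apply/eqP/setP => i; move: (H i); rewrite negbK => /eqP.
set s := \sum_x _.
have : s = - s.
  rewrite {1}/s (reindex_inj (inv_inj (@flipK n i))) /= -sumrN.
  apply: eq_bigr => x _; rewrite !chi_flip.
  by move: Hi; case: (i \in S); case: (i \in T) => //= _; rewrite ?mulN1r ?mul1r ?mulrN ?mulNr ?opprK.
move/eqP; rewrite -subr_eq0 opprK -mulr2n -mulr_natr mulf_eq0 /= => /orP [/eqP //|].
by rewrite pnatr_eq0.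
Qed.

Lemma chi_dual (R : realType) n (x y : cube n) :
  \sum_(S : {set 'I_n}) chi R S x * chi R S y = if x == y then (2 ^ n)%:R else 0.
Proof.
pose a i := spin R (x i) * spin R (y i).
transitivity (\prod_(i < n) (a i + 1)).
  rewrite bigA_distr; apply: eq_bigr => S _.
  by rewrite /chi -big_split /= big_mkcond.
case: eqP => [exy|/eqP xy].
  rewrite (eq_bigr (fun _ => 2)); last by move=> i _; rewrite /a exy spin2.
  by rewrite prodr_const card_ord natrX.
have [i Hi] : exists i, x i != y i.
  apply/existsP; move: xy; apply: contraR; rewrite negb_exists => /forallP H.
  by apply/eqP/ffunP => i; move: (H i); rewrite negbK => /eqP.
rewrite (bigD1 i) //= /a; move: Hi.
by case: (x i); case: (y i) => //= _; rewrite /spin ?mulrN ?mulNr mulr1 addNr mul0r.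
Qed.

Lemma two_pow_neq0 (R : realType) n : (2 ^+ n : R) != 0.
Proof. by rewrite expf_neq0 // pnatr_eq0. Qed.

Lemma fourier_inv (R : realType) n (g : cube n -> R) (y : cube n) :
  \sum_(S : {set 'I_n}) fhat g S * chi R S y = g y.
Proof.
rewrite /fhat.
transitivity ((2 ^+ n)^-1 * \sum_(S : {set 'I_n}) \sum_(x : cube n) g x * chi R S x * chi R S y).
  by rewrite mulr_sumr; apply: eq_bigr => S _; rewrite -mulrA mulr_suml.
transitivity ((2 ^+ n)^-1 * \sum_(x : cube n) g x * \sum_(S : {set 'I_n}) chi R S x * chi R S y).
  congr (_ * _); rewrite exchange_big; apply: eq_bigr => x _; rewrite mulr_sumr.
  by apply: eq_bigr => S _; rewrite mulrA.
under eq_bigr do rewrite chi_dual.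
rewrite (bigD1 y) //= eqxx big1 => [|x /negbTE -> ]; last by rewrite mulr0.
by rewrite addr0 natrX mulrCA mulVf ?mulr1 // two_pow_neq0.
Qed.

Definition ev (R : realType) m (c : {set 'I_m} -> R) (x : cube m) : R :=
  \sum_(S : {set 'I_m}) c S * chi R S x.

Lemma fhat_ev (R : realType) m (c : {set 'I_m} -> R) T : fhat (ev c) T = c T.
Proof.
rewrite /fhat /ev.
transitivity ((2 ^+ m)^-1 * \sum_(S : {set 'I_m}) c S * \sum_(x : cube m) chi R S x * chi R T x).
  congr (_ * _); under eq_bigr do rewrite mulr_suml.
  rewrite exchange_big /=; apply: eq_bigr => S _.
  rewrite mulr_sumr; apply: eq_bigr => x _; by rewrite mulrA.
under eq_bigr do rewrite chi_orth.
rewrite (bigD1 T) //= eqxx big1 => [|S /negbTE -> ]; last by rewrite mulr0.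
by rewrite addr0 natrX mulrCA mulVf ?mulr1 // two_pow_neq0.
Qed.

Lemma deg_ev (R : realType) m (c : {set 'I_m} -> R) k :
  (forall S : {set 'I_m}, (k < #|S|)%N -> c S = 0) -> (deg (ev c) <= k)%N.
Proof.
move=> Hc; rewrite /deg; apply/bigmax_leqP => S; rewrite /= fhat_ev; apply: contraR.
by rewrite -ltnNge => /Hc ->; rewrite eqxx.
Qed.

Lemma deg_le (R : realType) n (f : cube n -> R) : (deg f <= n)%N.
Proof.
rewrite /deg; apply/bigmax_leqP => S _; rewrite -[X in (_ <= X)%N](card_ord n); exact: max_card.
Qed.

Definition tog n (i : 'I_n) (S : {set 'I_n}) : {set 'I_n} :=
  if i \in S then S :\ i else i |: S.

Lemma togK n i : involutive (@tog n i).
Proof.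
move=> S; rewrite /tog; case iS: (i \in S).
  by rewrite in_setD1 eqxx /= setD1K.
by rewrite setU11 setU1K // iS.
Qed.

Lemma card_tog n i (S : {set 'I_n}) : (#|S| <= #|tog i S| + 1)%N.
Proof.
rewrite /tog; case: ifP => iS.
  by rewrite (cardsD1 i S) iS addnC.
by rewrite cardsU1 iS; lia.
Qed.

Lemma chi_tog (R : realType) n (i : 'I_n) (S : {set 'I_n}) (x : cube n) :
  spin R (x i) * chi R S x = chi R (tog i S) x.
Proof.
rewrite /chi /tog; case: ifP => iS.
  by rewrite (big_setD1 i iS) /= mulrA spin2 mul1r.
by rewrite big_setU1 //= iS.
Qed.

Lemma ev_spin (R : realType) m (i : 'I_m) (B : {set 'I_m} -> R) (x : cube m) :
  spin R (x i) * ev B x = ev (fun S => B (tog i S)) x.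
Proof.
rewrite /ev mulr_sumr (reindex_inj (inv_inj (@togK m i))) /=.
by apply: eq_bigr => S _; rewrite mulrCA chi_tog togK.
Qed.

Lemma ev_add (R : realType) m (f g : {set 'I_m} -> R) x :
  ev (fun S => f S + g S) x = ev f x + ev g x.
Proof. by rewrite /ev -big_split; apply: eq_bigr => S _; rewrite mulrDl. Qed.

Lemma ev_scale (R : realType) m a (f : {set 'I_m} -> R) x :
  ev (fun S => a * f S) x = a * ev f x.
Proof. by rewrite /ev mulr_sumr; apply: eq_bigr => S _; rewrite mulrA. Qed.

Lemma ev_comb (R : realType) m (i : 'I_m) b (A B : {set 'I_m} -> R) x :
  ev (fun S => A S + (2^-1 * B S + (spin R b / 2) * B (tog i S))) x =
  ev A x + (1 + spin R b * spin R (x i)) / 2 * ev B x.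
Proof.
rewrite ev_add ev_add ev_scale ev_scale -ev_spin; congr (_ + _).
by rewrite mulrDl mul1r mulrA [_ * spin R (x i)]mulrC !mulrA; ring.
Qed.

Lemma interp_base (R : realType) m (X : {set cube m}) k (v : cube m -> R) :
  (#|X| <= 1)%N -> exists c : {set 'I_m} -> R,
    (forall S : {set 'I_m}, (k < #|S|)%N -> c S = 0) /\
    forall x, x \in X -> ev c x = v x.
Proof.
move=> /card_le1_eqP HX.
case: (pickP (mem X)) => [x0 Hx0|none]; last first.
  by exists (fun _ => 0); split => // x; rewrite -[x \in X]/(mem X x) none.
exists (fun S => if S == set0 then v x0 else 0); split.
  by move=> S HS; case: eqP => // S0; rewrite S0 cards0 in HS.
move=> x Hx; rewrite (HX x x0 Hx Hx0) /ev (bigD1 set0) //= eqxx big1.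
  by rewrite /chi big_set0 mulr1 addr0.
by move=> S /negbTE ->; rewrite mul0r.
Qed.

Lemma spin_neq (R : realType) (b c : bool) : c != b -> spin R b * spin R c = -1.
Proof. by case: b; case: c => //= _; rewrite /spin ?mulrN ?mulNr mulr1. Qed.

Lemma bool3 (p q b : bool) : p != q -> p != b -> q == b.
Proof. by case: p; case: q; case: b. Qed.

Lemma interp (R : realType) m N : forall (X : {set cube m}) k (v : cube m -> R),
  (#|X| <= N)%N -> (#|X| < 2 ^ k.+1)%N -> exists c : {set 'I_m} -> R,
    (forall S : {set 'I_m}, (k < #|S|)%N -> c S = 0) /\
    forall x, x \in X -> ev c x = v x.
Proof.
elim: N => [|N IH] X k v hN hk.
  by apply: interp_base; lia.
case: (leqP #|X| 1) => [h1|/card_gt1P [x [y [xX yX xy]]]].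
  exact: interp_base.
have [i Hi] : exists i, x i != y i.
  apply/existsP; move: xy; apply: contraR; rewrite negb_exists => /forallP H.
  by apply/eqP/ffunP => i; move: (H i); rewrite negbK => /eqP.
have key : forall b, (2 * #|X :&: [set z : cube m | z i == b]| <= #|X|)%N ->
    exists c : {set 'I_m} -> R,
    (forall S : {set 'I_m}, (k < #|S|)%N -> c S = 0) /\
    forall x, x \in X -> ev c x = v x.
  move=> b hb.
  set Xs := X :&: [set z : cube m | z i == b]; set Xg := X :\: [set z : cube m | z i == b].
  have hsum := cardsID [set z : cube m | z i == b] X.
  rewrite -/Xs -/Xg in hsum.
  have [w1 [w2 [w1s w2g]]] : exists w1 w2, w1 \in Xs /\ w2 \in Xg.
    rewrite /Xs /Xg; case: (eqVneq (x i) b) => xb.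
      exists x, y; rewrite !inE xX yX xb /=; split => //.
      by rewrite -xb andbT eq_sym.
    exists y, x; rewrite !inE xX yX xb /=; split => //; exact: bool3 Hi xb.
  have hs : (0 < #|Xs|)%N by apply/card_gt0P; exists w1.
  have hg : (0 < #|Xg|)%N by apply/card_gt0P; exists w2.
  case: k hk => [|k'] hk.
    rewrite expn1 in hk; exfalso; move: hsum hs hg hk.
    by move: (#|Xs|) (#|Xg|) (#|X|) => *; lia.
  have [hg1 hg2] : (#|Xg| <= N)%N /\ (#|Xg| < 2 ^ k'.+2)%N.
    move: hsum hs hg hk hN; move: (2 ^ k'.+2)%N (#|Xs|) (#|Xg|) (#|X|) => *; lia.
  have [A [hA1 hA2]] := IH Xg k'.+1 v hg1 hg2.
  have [hs1 hk2] : (#|Xs| <= N)%N /\ (#|Xs| < 2 ^ k'.+1)%N.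
    rewrite expnS in hk.
    move: hsum hs hg hk hN hb; rewrite -/Xs.
    move: (2 ^ k'.+1)%N (#|Xs|) (#|Xg|) (#|X|) => *; lia.
  have [B [hB1 hB2]] := IH Xs k' (fun z => v z - ev A z) hs1 hk2.
  exists (fun S => A S + (2^-1 * B S + (spin R b / 2) * B (tog i S))); split.
    move=> S hS; rewrite hA1 ?hB1 //; last by lia.
      by rewrite !mulr0 !addr0.
    by have := card_tog i S; lia.
  move=> z zX; rewrite ev_comb; case: (eqVneq (z i) b) => zb.
    have zs : z \in Xs by rewrite /Xs !inE zX zb eqxx.
    rewrite hB2 // zb spin2.
    have -> : (1 + 1) / 2 = 1 :> R by rewrite -mulr2n divff // pnatr_eq0.
    by rewrite mul1r addrC subrK.
  have zg : z \in Xg by rewrite /Xg !inE zX zb.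
  have -> : spin R b * spin R (z i) = -1.
    exact: spin_neq.
  by rewrite addrN mul0r mul0r addr0 hA2.
case: (leqP (2 * #|X :&: [set z : cube m | z i == true]|) #|X|) => hb.
  exact: (key true).
apply: (key false).
have -> : X :&: [set z : cube m | z i == false] = X :\: [set z : cube m | z i == true].
  by apply/setP => z; rewrite !inE; case: (z i); rewrite ?andbF ?andbT.
move: (cardsID [set z : cube m | z i == true] X) hb.
by move: (#|X :&: _|) (#|X :\: _|) (#|X|) => *; lia.
Qed.

Lemma bigmin_le (I : eqType) (j : I) (r : seq I) (P : pred I) (F : I -> nat) x0 :
  j \in r -> P j -> (\big[minn/x0]_(i <- r | P i) F i <= F j)%N.
Proof.
elim: r => // a r IH; rewrite inE big_cons => /orP [/eqP <-|jr] Pj.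
  by rewrite Pj geq_minl.
case: (P a); last exact: IH. exact: leq_trans (geq_minr _ _) (IH jr Pj).
Qed.

Lemma degHmin_le (R : realType) m d (psi : cube d -> cube m) (h f : cube m -> R) :
  inH psi h f -> (degHmin psi h <= deg f)%N.
Proof.
move=> hf; rewrite /degHmin.
have hlt : (deg f < m.+1)%N by rewrite ltnS deg_le.
apply: (@bigmin_le _ (Ordinal hlt) _ _ (fun k : 'I_m.+1 => nat_of_ord k)) => //=; first exact: mem_index_enum.
by apply/asboolP; exists f.
Qed.

Lemma maxgdeg_ge (R : realType) m d (psi : cube d -> cube m) (h : cube m -> R)
  (Phi' : cube m -> 'I_d -> R) (g : cube d -> R) :
  inH psi h (compml g Phi') -> (deg g <= maxgdeg psi h Phi')%N.
Proof.
move=> hg; rewrite /maxgdeg.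
have hlt : (deg g < d.+1)%N by rewrite ltnS deg_le.
apply: (leq_bigmax_cond (Ordinal hlt)) => /=.
by apply/asboolP; exists g.
Qed.

Lemma compml_inH (R : realType) m d (psi : cube d -> cube m) (h : cube m -> R)
  (Phi : cube m -> cube d) (Phis : cube m -> 'I_d -> R) (g : cube d -> R) :
  inHmap psi Phi Phis -> inH psi h (g \o Phi) -> inH psi h (compml g Phis).
Proof.
move=> hP hg z; rewrite /compml hP -(hg z) /= -fourier_inv.
by rewrite /mlext /embed.
Qed.

Lemma degmap_le (R : realType) m d (hdm : (d <= m)%N)
  (psi : cube d -> cube m) (psi_inj : injective psi)
  (Phi : cube m -> cube d) (Phis : cube m -> 'I_d -> R) :
  inHminmap psi Phi Phis -> (degmap Phis <= d ^ 2)%N.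
Proof.
case=> _ hmin.
set X := [set psi z | z : cube d].
have hX : #|X| = (2 ^ d)%N by rewrite card_imset // card_cube.
have hall : forall j : 'I_d, exists c : {set 'I_m} -> R,
    (forall S : {set 'I_m}, (d < #|S|)%N -> c S = 0) /\
    forall x, x \in X -> ev c x = spin R (Phi x j).
  move=> j; apply: (@interp R m #|X| X d) => //.
  by rewrite hX expnS; have := expn_gt0 2 d; lia.
have [C HC] := fin_all_exists hall.
pose Phi2 := fun x (j : 'I_d) => ev (C j) x.
have h2 : inHmap psi Phi Phi2.
  move=> z; apply: funext => j; rewrite /Phi2 /embed (proj2 (HC j)) //.
  by apply/imsetP; exists z.
apply: leq_trans (hmin _ h2) _.
rewrite /degmap -mulnn -[X in (_ <= X * _)%N](card_ord d) -sum_nat_const.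
by apply: leq_sum => j _; apply: deg_ev; case: (HC j).
Qed.

Theorem theorem2 (R : realType) (m d : nat) (hdm : (d <= m)%N) (hd : (0 < d)%N)
  (psi : cube d -> cube m) (psi_inj : injective psi)
  (p : cube d -> R) (p_pos : forall z, 0 < p z) (p_sum : \sum_(z : cube d) p z = 1)
  (n : nat) (h : 'I_n -> cube m -> R) (h_distinct : injective h)
  (hs : 'I_n -> cube m -> R) (hs_min : forall i, inHmin psi (h i) (hs i))
  (Phi : cube m -> cube d) (g : 'I_n -> cube d -> R)
  (hg : forall i, inH psi (h i) (g i \o Phi))
  (Phis : cube m -> 'I_d -> R) (hPhis : inHminmap psi Phi Phis) :
  (\sum_(i < n) deg (hs i))%:Z
    - ((\sum_(i < n) deg (g i))%N + (\sum_(j < d) deg (fun x => Phis x j))%N)%:Z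
  >= \sum_(i < n) condDeg psi (h i) Phis - (d ^ 2)%N%:Z.
Proof.
have hdm2 := degmap_le hdm psi_inj hPhis; rewrite /degmap in hdm2.
have hterm : forall i : 'I_n, condDeg psi (h i) Phis <= (deg (hs i))%:Z - (deg (g i))%:Z.
  move=> i; rewrite /condDeg.
  have a := degHmin_le (proj1 (hs_min i)).
  have b := maxgdeg_ge (compml_inH (proj1 hPhis) (hg i)).
  lia.
have e : forall F : 'I_n -> nat, \sum_(i < n) (F i)%:Z = (\sum_(i < n) F i)%:Z.
  by move=> F; rewrite (big_morph Posz PoszD (erefl 0%:Z)).
have hsum : \sum_(i < n) condDeg psi (h i) Phis <=
    (\sum_(i < n) deg (hs i))%:Z - (\sum_(i < n) deg (g i))%:Z.
  by rewrite -!e -sumrB; apply: ler_sum => i _; exact: hterm.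
move: hsum hdm2.
move: (\sum_(i < n) condDeg psi (h i) Phis) (\sum_(i < n) deg (hs i))%N
  (\sum_(i < n) deg (g i))%N (\sum_(j < d) deg (fun x => Phis x j))%N (d ^ 2)%N => *.
lia.
Qed.
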